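(* Let $G=(V,E)$ be a finite connected graph and $A$ an irreducible, lazy transition matrix on $V$, with $E_A=\{(i,j)\in V\times V:A(i,j)>0\}$. Let $i\in V$. Then there exist a finite integer $s(i)$ and a sequence $(i=i_1,i_2,\dots,i_{s(i)})\in V^{s(i)}$ with $(i_j,i_{j+1})\in E_A$ for all $j$, such that the configuration $$x^{(i)}:=T_{i_{s(i)}}\cdots T_{i_1}(T_i)^{s(i)}x$$ is the same for every initial configuration $x\in S^{(i)}$, and satisfies $\min_{j\in V}x^{(i)}_j\ge-2s(i)$.
   Context: $S=(-\mathbb{N}_0)^V$ is the space of height profiles seen from the maximum, and $S^{(i)}=\{x\in S:x_i=0\}$. For $x\in S$ and $i\in V$, $T_ix\in S$ is obtained by first setting $x'_i=\max\{x_k:\operatorname{dist}(k,i)\le1\}+1$, $x'_j=x_j$ for $j\ne i$ (dist the graph distance in $G$), and then $(T_ix)_j=x'_j-\max_kx'_k$. Irreducible: for all $v\neq v'$ there is $s$ with $A^s(v,v')>0$; lazy: $A(v,v)>0$ for all $v$. *)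

(* Defs.v *)
From mathcomp Require Import all_boot all_order all_algebra.
Set Implicit Arguments. Unset Strict Implicit. Unset Printing Implicit Defensive.
Import Order.TTheory GRing.Theory Num.Theory.
Local Open Scope ring_scope.

Definition simple_graph (n : nat) (e : rel 'I_n) : Prop :=
  symmetric e /\ irreflexive e.

Definition connected_graph (n : nat) (e : rel 'I_n) : Prop :=
  forall u v : 'I_n, connect e u v.

Definition transition_matrix (R : numDomainType) (n : nat) (A : 'M[R]_n) : Prop :=
  (forall u v, 0 <= A u v) /\ (forall u, \sum_(v < n) A u v = 1).

Definition irreducible_mx (R : numDomainType) (n : nat) (A : 'M[R]_n) : Prop :=
  forall v v' : 'I_n, v != v' -> exists s : nat, 0 < (A ^+ s) v v'.

Definition lazy_mx (R : numDomainType) (n : nat) (A : 'M[R]_n) : Prop :=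
  forall v : 'I_n, 0 < A v v.

Definition EA (R : numDomainType) (n : nat) (A : 'M[R]_n) : rel 'I_n :=
  fun u v => 0 < A u v.

Definition config (n : nat) := {ffun 'I_n -> int}.

Definition in_S (n : nat) (x : config n) : Prop := forall j, x j <= 0.
Definition in_Si (n : nat) (i : 'I_n) (x : config n) : Prop := in_S x /\ x i = 0.

Definition within1 (n : nat) (e : rel 'I_n) (k i : 'I_n) : bool := (k == i) || e k i.

Definition raise (n : nat) (e : rel 'I_n) (i : 'I_n) (x : config n) : config n :=
  [ffun j => if j == i then (\big[Num.max/x i]_(k | within1 e k i) x k) + 1 else x j].

Definition T (n : nat) (e : rel 'I_n) (i : 'I_n) (x : config n) : config n :=
  let x' := raise e i x in
  [ffun j => x' j - \big[Num.max/x' i]_(k < n) x' k].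

(* Main.v *)
Require Import Defs.
From mathcomp Require Import all_boot all_order all_algebra.
From mathcomp Require Import zify.
Import Order.TTheory GRing.Theory Num.Theory.
Local Open Scope ring_scope.
Set Implicit Arguments. Unset Strict Implicit. Unset Printing Implicit Defensive.

Section Aux.
Variable n : nat.
Variable e : rel 'I_n.
Implicit Types h x : config n.

Definition ismax (P : pred 'I_n) h (m : int) :=
  (forall k, P k -> h k <= m) /\ exists2 k, P k & h k = m.

Lemma ismax_uniq P h m1 m2 : ismax P h m1 -> ismax P h m2 -> m1 = m2.
Proof.
move=> [ub1 [k1 P1 e1]] [ub2 [k2 P2 e2]]; apply/eqP; rewrite eq_le.
by apply/andP; split; [rewrite -e1; apply: ub2 | rewrite -e2; apply: ub1].
Qed.

Lemma ismax_big (P : pred 'I_n) h j : P j ->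
  ismax P h (\big[Num.max/h j]_(k | P k) h k).
Proof.
move=> Pj; split.
  by move=> k Pk; apply: le_bigmax_cond.
have: exists2 k, P k & (\big[Num.max/h j]_(k | P k) h k) = h k.
  apply: (big_ind (fun y => exists2 k, P k & y = h k)).
  - by exists j.
  - move=> a b [ka Pa ->] [kb Pb ->]; rewrite maxEle.
    by case: ifP => _; [exists kb | exists ka].
  - by move=> k Pk; exists k.
by move=> [k Pk ->]; exists k.
Qed.

Definition Nb v := fun k => within1 e k v.

Lemma ismax_raise v h : ismax (Nb v) h (\big[Num.max/h v]_(k | within1 e k v) h k).
Proof. by apply: (@ismax_big (Nb v) h v); rewrite /Nb /within1 eqxx. Qed.

Lemma raiseE v h m : ismax (Nb v) h m ->
  raise e v h = [ffun j => if j == v then m + 1 else h j].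
Proof.
move=> H; apply/ffunP => j; rewrite /raise !ffunE; case: eqP => // _.
by rewrite (ismax_uniq (ismax_raise v h) H).
Qed.

Lemma TE v h M : ismax predT (raise e v h) M ->
  T e v h = [ffun j => raise e v h j - M].
Proof.
move=> H; apply/ffunP => j; rewrite /T /= ffunE [RHS]ffunE.
congr (_ - _); apply: ismax_uniq H.
exact: (@ismax_big predT _ _).
Qed.

Lemma ismaxT_ex v h : exists M, ismax predT (raise e v h) M.
Proof. eexists; exact: (@ismax_big predT (raise e v h) v). Qed.

Lemma ismaxN_ex v h : exists M, ismax (Nb v) h M.
Proof. eexists; exact: ismax_raise. Qed.

Definition shiftc h (c : int) : config n := [ffun j => h j + c].

Lemma ismax_shift P h m c : ismax P h m -> ismax P (shiftc h c) (m + c).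
Proof.
move=> [ub [k Pk ek]]; split.
  by move=> j Pj; rewrite ffunE lerD2r ub.
by exists k; rewrite // ffunE ek.
Qed.

Lemma shiftcK h c1 c2 : shiftc (shiftc h c1) c2 = shiftc h (c1 + c2).
Proof. by apply/ffunP => j; rewrite !ffunE addrA. Qed.

Lemma shiftc0 h : shiftc h 0 = h.
Proof. by apply/ffunP => j; rewrite !ffunE addr0. Qed.

Lemma raise_shift v h c : raise e v (shiftc h c) = shiftc (raise e v h) c.
Proof.
have [m Hm] := ismaxN_ex v h.
rewrite (raiseE (ismax_shift c Hm)) (raiseE Hm).
apply/ffunP => j; rewrite !ffunE; case: eqP => _; last by [].
by rewrite addrAC.
Qed.

Lemma TE2 v h : exists M, T e v h = shiftc (raise e v h) (- M) /\ ismax predT (raise e v h) M.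
Proof.
have [M HM] := ismaxT_ex v h; exists M; split => //.
by rewrite (TE HM); apply/ffunP => j; rewrite !ffunE.
Qed.

Lemma T_shift v h c : T e v (shiftc h c) = T e v h.
Proof.
have [M [E HM]] := TE2 v h.
have HM' := ismax_shift c HM; rewrite -raise_shift in HM'.
rewrite (TE HM') E raise_shift; apply/ffunP => j; rewrite !ffunE.
by rewrite opprD addrACA subrr addr0.
Qed.

Lemma T_top v h : (forall j, T e v h j <= 0) /\ exists k, T e v h k = 0.
Proof.
have [M [E [ub [k _ ek]]]] := TE2 v h; rewrite E; split.
  by move=> j; rewrite ffunE subr_le0 ub.
by exists k; rewrite ffunE ek subrr.
Qed.

Definition Rf := fun z k => raise e k z.
Definition Tf := fun z k => T e k z.

Lemma foldR_shift L h c : foldl Rf (shiftc h c) L = shiftc (foldl Rf h L) c.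
Proof.
elim: L h => //= v L IH h; by rewrite /Rf raise_shift IH.
Qed.

Lemma foldT L x : exists c, foldl Tf x L = shiftc (foldl Rf x L) c.
Proof.
elim: L x => [|v L IH] x /=; first by exists 0; rewrite shiftc0.
have [M [E _]] := TE2 v x.
have [c2 ->] := IH (T e v x).
rewrite /Tf /Rf E foldR_shift shiftcK; by exists (- M + c2).
Qed.

Lemma iterT v s x : exists c, iter s (T e v) x = shiftc (iter s (raise e v) x) c.
Proof.
elim: s => [|s [c IH]] /=; first by exists 0; rewrite shiftc0.
rewrite IH T_shift.
have [M [E _]] := TE2 v (iter s (raise e v) x); rewrite E; by exists (- M).
Qed.

Lemma foldT_last L v x : exists w z, foldl Tf x (v :: L) = T e w z.
Proof.
elim: L v x => [|u L IH] v x /=; first by exists v, x.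
exact: IH.
Qed.

Lemma iter_raise x i t : in_Si i x ->
  (iter t (raise e i) x) i = t%:Z /\ forall j, j != i -> iter t (raise e i) x j = x j.
Proof.
move=> [Sx xi]; elim: t => [|t [IHi IHj]] /=; first by split.
have Hm : ismax (Nb i) (iter t (raise e i) x) t%:Z.
  split; last by exists i; rewrite // /Nb /within1 eqxx.
  move=> k _; case: (eqVneq k i) => [->|ki]; first by rewrite IHi.
  by rewrite IHj // (le_trans (Sx k)).
rewrite (raiseE Hm) !ffunE eqxx; split; first by lia.
by move=> j ji; rewrite ffunE (negbTE ji) IHj.
Qed.

Definition cl1 (C : {set 'I_n}) v :=
  if [exists k, (k \in C) && within1 e k v] then v |: C else C.
Definition clL C L := foldl cl1 C L.

Variable s : nat.

Definition Inv (t : nat) (C : {set 'I_n}) h :=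
  [/\ (forall c, c \in C -> s%:Z <= h c),
      (forall d, d \notin C -> h d <= t%:Z) &
      (forall k, h k <= (s + t)%N%:Z)].

Definition agree (C : {set 'I_n}) h1 h2 := forall c, c \in C -> h1 c = h2 c.

Lemma inv_step t C h v : (t < s)%N -> Inv t C h ->
  Inv t.+1 (cl1 C v) (raise e v h).
Proof.
move=> ts [IC ID IK].
have [m Hm] := ismaxN_ex v h; have [ub [k1 Nk1 ek1]] := Hm.
rewrite (raiseE Hm) /cl1.
case: ifP => [/existsP [k0 /andP [k0C Nk0]] | /existsP nex].
- split.
  + move=> c; rewrite in_setU1 ffunE; case: eqP => [_ _|_ /= cC]; last exact: IC.
    have := IC k0 k0C; have := ub k0 Nk0; lia.
  + move=> d; rewrite in_setU1 negb_or ffunE => /andP [dv dC].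
    rewrite (negbTE dv); have := ID d dC; lia.
  + move=> k; rewrite ffunE; case: eqP => _; last by have := IK k; lia.
    have := IK k1; rewrite ek1; lia.
- have k1C : k1 \notin C.
    by apply/negP => k1C; apply: nex; exists k1; rewrite k1C.
  have mt := ID k1 k1C; rewrite ek1 in mt.
  have vC : v \notin C.
    by apply/negP => vC; apply: nex; exists v; rewrite vC /within1 eqxx.
  split.
  + move=> c cC; rewrite ffunE; case: eqP => [cv|_]; last exact: IC.
    by move: cC; rewrite cv (negbTE vC).
  + move=> d dC; rewrite ffunE; case: eqP => _; first lia.
    have := ID d dC; lia.
  + move=> k; rewrite ffunE; case: eqP => _; first lia.
    have := IK k; lia.
Qed.

Lemma agree_step t C h1 h2 v : (t < s)%N -> Inv t C h1 -> Inv t C h2 ->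
  agree C h1 h2 -> agree (cl1 C v) (raise e v h1) (raise e v h2).
Proof.
move=> ts [IC1 ID1 IK1] [IC2 ID2 IK2] ag.
have [m1 Hm1] := ismaxN_ex v h1; have [ub1 [k1 Nk1 ek1]] := Hm1.
have [m2 Hm2] := ismaxN_ex v h2; have [ub2 [k2 Nk2 ek2]] := Hm2.
rewrite (raiseE Hm1) (raiseE Hm2) /cl1.
case: ifP => [/existsP [k0 /andP [k0C Nk0]] | /existsP nex].
- have k1C : k1 \in C.
    apply/negPn/negP => k1C; have := ID1 k1 k1C; have := IC1 k0 k0C.
    have := ub1 k0 Nk0; rewrite ek1; lia.
  have k2C : k2 \in C.
    apply/negPn/negP => k2C; have := ID2 k2 k2C; have := IC2 k0 k0C.
    have := ub2 k0 Nk0; rewrite ek2; lia.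
  have m12 : m1 = m2.
    have := ub1 k2 Nk2; have := ub2 k1 Nk1; rewrite -ek1 -ek2 (ag _ k1C) (ag _ k2C).
    lia.
  move=> c; rewrite in_setU1 !ffunE; case: eqP => [_ _|_ /= cC]; first by rewrite m12.
  exact: ag.
- have vC : v \notin C.
    by apply/negP => vC; apply: nex; exists v; rewrite vC /within1 eqxx.
  move=> c cC; rewrite !ffunE; case: eqP => [cv|_]; last exact: ag.
  by move: cC; rewrite cv (negbTE vC).
Qed.

Lemma fold_inv L t C h1 h2 : (t + size L <= s)%N -> Inv t C h1 -> Inv t C h2 ->
  agree C h1 h2 ->
  [/\ Inv (t + size L) (clL C L) (foldl Rf h1 L),
      Inv (t + size L) (clL C L) (foldl Rf h2 L) &
      agree (clL C L) (foldl Rf h1 L) (foldl Rf h2 L)].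
Proof.
elim: L t C h1 h2 => [|v L IH] t C h1 h2 /=; first by rewrite addn0.
move=> ts I1 I2 ag.
have ts' : (t < s)%N by lia.
rewrite -addSnnS; apply: IH.
- lia.
- exact: inv_step.
- exact: inv_step.
- exact: (agree_step ts' I1 I2 ag).
Qed.

End Aux.

Lemma cross n (e : rel 'I_n) (C : {set 'I_n}) c d : c \in C -> d \notin C ->
  connect e c d -> exists u v, [/\ u \in C, v \notin C & e u v].
Proof.
move=> cC dC /connectP [p pp dl]; elim: p c cC pp dl => [|y p IH] c cC /=.
  by move=> _ dc; move: dC; rewrite dc cC.
move=> /andP [ecy py] dl; case: (boolP (y \in C)) => yC.
  exact: IH yC py dl.
by exists c, y.
Qed.

Lemma cl1_sub n (e : rel 'I_n) (C : {set 'I_n}) v : C \subset cl1 e C v.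
Proof. by rewrite /cl1; case: ifP => // _; apply: subsetUr. Qed.

Lemma cl1_in n (e : rel 'I_n) (D : {set 'I_n}) u v :
  u \in D -> within1 e u v -> cl1 e D v = v |: D.
Proof.
move=> uD w; rewrite /cl1; case: ifP => // /existsP [].
by exists u; rewrite uD w.
Qed.

Lemma clL_sub n (e : rel 'I_n) (C : {set 'I_n}) L : C \subset clL e C L.
Proof.
elim: L C => [|v L IH] C /=; first exact: subxx.
exact: subset_trans (cl1_sub e C v) (IH _).
Qed.

Lemma walk n (e : rel 'I_n) (E : rel 'I_n) i :
  connected_graph e -> (forall u w, connect E u w) -> (forall v, E v v) ->
  forall N (C : {set 'I_n}) cur, i \in C -> (n - #|C| <= N)%N ->
  exists p, path E cur p /\ clL e C p = setT.
Proof.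
move=> cg cE lz; elim=> [|N IH] C cur iC hN.
  exists [::]; split => //=; apply/eqP; rewrite eqEcard subsetT cardsT card_ord.
  lia.
case: (boolP (C == setT)) => [/eqP CT|CT]; first by exists [::]; split.
have [d dC] : exists d, d \notin C.
  apply/existsP; apply: contraR CT => /existsPn H.
  by apply/eqP/setP => x; rewrite in_setT; have := H x; rewrite negbK.
have [u [v [uC vC euv]]] := cross iC dC (cg i d).
have /connectP [p1 pp1 vl] := cE cur v.
set D := clL e C (rcons p1 v).
have vD : v |: C \subset D.
  rewrite /D -cats1 /clL foldl_cat /=.
  have : C \subset foldl (cl1 e) C p1 := clL_sub e C p1.
  move=> sub; have uD := subsetP sub u uC.
  rewrite (cl1_in uD (_ : within1 e u v)); last by rewrite /within1 euv orbT.
  by apply: setUS.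
have iD : i \in D by apply: (subsetP vD); rewrite in_setU1 iC orbT.
have cardD : (#|C| < #|D|)%N.
  by apply: leq_trans (subset_leq_card vD); rewrite cardsU1 vC.
have [q [pq qT]] := IH D v iD (ltac:(lia)).
exists (rcons p1 v ++ q); split.
  by rewrite cat_path rcons_path pp1 -vl lz last_rcons pq.
by rewrite /clL foldl_cat -/(clL e C (rcons p1 v)) -/D.
Qed.

Lemma pow_connect (R : realFieldType) n (A : 'M[R]_n) :
  transition_matrix A -> forall s u w, 0 < (A ^+ s) u w -> connect (EA A) u w.
Proof.
move=> [A0 _]; elim=> [|s IH] u w.
  rewrite expr0 mxE; case: eqP => [->|_]; first by rewrite connect0.
  by rewrite ltxx.
rewrite exprSr -mulmxE mxE => H.
have [k Hk] : exists k, 0 < (A ^+ s) u k * A k w.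
  apply/existsP; apply: contraLR H => /existsPn H.
  rewrite -leNgt; apply: sumr_le0 => k _; rewrite leNgt; exact: H k.
have Akw : 0 < A k w.
  rewrite lt_def A0 andbT; apply/negP => /eqP E; by rewrite E mulr0 ltxx in Hk.
rewrite pmulr_lgt0 // in Hk.
apply: connect_trans (IH _ _ Hk) _; apply: connect1; exact: Akw.
Qed.

(* The sequence (i_1,...,i_s) is i :: rest, with s = (size rest).+1;
   x^(i) = T_{i_s} ... T_{i_1} (T_i)^s x. *)
Theorem mainTheorem8 (R : realFieldType) (n : nat) (e : rel 'I_n) (A : 'M[R]_n)
    (i : 'I_n) :
  simple_graph e -> connected_graph e ->
  transition_matrix A -> irreducible_mx A -> lazy_mx A ->
  exists rest : seq 'I_n,
    path (EA A) i rest /\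
    exists y : config n,
      (forall x : config n, in_Si i x ->
         foldl (fun z k => T e k z) (iter (size rest).+1 (T e i) x) (i :: rest) = y) /\
      (forall j : 'I_n, - (2 * ((size rest).+1)%:Z) <= y j).
Proof.
move=> _ cg tm irr lz.
have cE : forall u w, connect (EA A) u w.
  move=> u w; case: (eqVneq u w) => [->|uw]; first exact: connect0.
  have [s Hs] := irr u w uw; exact: pow_connect Hs.
have [rest [prest clT]] := @walk n e (EA A) i cg cE lz (n - #|[set i]|) [set i] i
  (set11 i) (leqnn _).
exists rest; split => //.
set s := (size rest).+1.
pose F x := foldl (Tf e) (iter s (T e i) x) (i :: rest).
pose H x := foldl (Rf e) (iter s (raise e i) x) (i :: rest).
have key : forall x, in_Si i x ->
    [/\ Inv s s [set: 'I_n] (H x), exists c, F x = shiftc (H x) c &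
        forall x2, in_Si i x2 -> H x = H x2].
  have I0 : forall x, in_Si i x -> Inv s 0 [set i] (iter s (raise e i) x).
    move=> x Sx; have [Hi Hj] := iter_raise e s Sx; split.
    - by move=> c; rewrite in_set1 => /eqP ->; rewrite Hi.
    - move=> d; rewrite in_set1 => di; rewrite Hj //; exact: Sx.1.
    - move=> k; case: (eqVneq k i) => [->|ki]; first by rewrite Hi; lia.
      by rewrite Hj //; apply: le_trans (Sx.1 k) _.
  have cl : clL e [set i] (i :: rest) = setT.
    rewrite /= /cl1.
    have -> : [exists k, (k \in [set i]) && within1 e k i].
      by apply/existsP; exists i; rewrite set11 /within1 eqxx.
    by rewrite setUid.
  move=> x Sx; split.
  - have [J _ _] := @fold_inv n e s (i :: rest) 0 _ _ _ (leqnn _) (I0 x Sx) (I0 x Sx)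
      (fun _ _ => erefl).
    by rewrite cl in J.
  - have [c0 E0] := iterT e i s x; have [c E] := foldT e (i :: rest) (iter s (T e i) x).
    exists (c0 + c); rewrite /F E E0 foldR_shift shiftcK //.
  - move=> x2 Sx2.
    have ag0 : agree [set i] (iter s (raise e i) x) (iter s (raise e i) x2).
      move=> c; rewrite in_set1 => /eqP ->.
      by rewrite (iter_raise e s Sx).1 (iter_raise e s Sx2).1.
    have [_ _ ag] := @fold_inv n e s (i :: rest) 0 _ _ _ (leqnn _) (I0 x Sx) (I0 x2 Sx2) ag0.
    rewrite cl in ag; apply/ffunP => j; exact: ag.
pose x0 : config n := [ffun => 0].
have S0 : in_Si i x0 by split; [move=> j|]; rewrite ffunE.
have top : forall x, (forall j, F x j <= 0) /\ exists k, F x k = 0.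
  move=> x; rewrite /F; have [w [z ->]] := foldT_last e rest i (iter s (T e i) x).
  exact: T_top.
have [[IC0 _ IK0] [c0 E0] _] := key x0 S0.
exists (F x0); split.
  move=> x Sx; have [_ [c1 E1] eqH] := key x Sx.
  rewrite -/(F x) E1 E0 (eqH x0 S0).
  have [ub1 [k1 z1]] := top x; have [ub0 [k0 z0]] := top x0.
  move: ub1 z1 ub0 z0; rewrite E1 E0 (eqH x0 S0) => ub1 z1 ub0 z0.
  have := ub1 k0; have := ub0 k1; rewrite !ffunE in z1 z0 * => a b.
  have -> : c1 = c0 by lia.
  by [].
move=> j; have [_ [k z]] := top x0; rewrite E0 !ffunE in z *.
have := IC0 j (in_setT j); have := IK0 k; lia.
Qed.
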